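(* For any $x, y \in [0,1]$ and $\Delta_x, \Delta_y \in \mathbb{R}$, there exists a $1$-Lipschitz function $f : [0,1] \to [-1,1]$ such that $$f(x)\Delta_x + f(y)\Delta_y = \begin{cases} |\Delta_x| + |\Delta_y|, & \Delta_x\Delta_y \ge 0,\\ |\Delta_x + \Delta_y| + |x-y|\cdot\min\{|\Delta_x|, |\Delta_y|\}, & \Delta_x\Delta_y < 0.\end{cases}$$ *)

(* Defs.v *)
From Stdlib Require Import Reals.
Open Scope R_scope.

(* f : [0,1] -> [-1,1] is 1-Lipschitz; represented as a total function R -> R
   whose restriction to [0,1] has these properties. *)
Definition lip1_on_unit (f : R -> R) : Prop :=
  (forall u, 0 <= u <= 1 -> -1 <= f u <= 1) /\
  (forall u v, 0 <= u <= 1 -> 0 <= v <= 1 -> Rabs (f u - f v) <= Rabs (u - v)).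

Definition lemma15_rhs (x y dx dy : R) : R :=
  if Rle_dec 0 (dx * dy) then Rabs dx + Rabs dy
  else Rabs (dx + dy) + Rabs (x - y) * Rmin (Rabs dx) (Rabs dy).

(* Main.v *)
Require Import Defs.
From Stdlib Require Import Reals Lra Psatz.
Open Scope R_scope.

Lemma lip_const (s : R) : -1 <= s <= 1 -> lip1_on_unit (fun _ => s).
Proof.
  intros Hs; split; [intros; lra|].
  intros u v _ _. replace (s - s) with 0 by ring. rewrite Rabs_R0. apply Rabs_pos.
Qed.

Lemma lip_tent (s p : R) : (s = 1 \/ s = -1) -> 0 <= p <= 1 ->
  lip1_on_unit (fun u => s * (1 - Rabs (u - p))).
Proof.
  intros Hs Hp; split.
  - intros u Hu. destruct Hs; subst; unfold Rabs; destruct Rcase_abs; lra.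
  - intros u v Hu Hv. destruct Hs; subst; unfold Rabs;
      repeat destruct Rcase_abs; lra.
Qed.

Theorem lemma15 (x y dx dy : R) (hx : 0 <= x <= 1) (hy : 0 <= y <= 1) :
  exists f : R -> R, lip1_on_unit f /\
    f x * dx + f y * dy = lemma15_rhs x y dx dy.
Proof.
  unfold lemma15_rhs. destruct (Rle_dec 0 (dx * dy)) as [H|H].
  - destruct (Rle_dec 0 (dx + dy)) as [H2|H2].
    + exists (fun _ => 1). split; [apply lip_const; lra|].
      assert (0 <= dx /\ 0 <= dy) by (split; nra).
      rewrite !Rabs_right; lra.
    + exists (fun _ => -1). split; [apply lip_const; lra|].
      assert (dx <= 0 /\ dy <= 0) by (split; nra).
      rewrite (Rabs_left1 dx), (Rabs_left1 dy); lra.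
  - assert (Hn : dx * dy < 0) by lra.
    destruct (Rle_dec (Rabs dy) (Rabs dx)) as [H3|H3].
    + rewrite Rmin_right by lra.
      destruct (Rle_dec 0 dx) as [H4|H4].
      * exists (fun u => 1 * (1 - Rabs (u - x))). split; [apply lip_tent; lra|].
        assert (dy < 0) by nra.
        replace (x - x) with 0 by ring. rewrite Rabs_R0.
        rewrite (Rabs_minus_sym x y).
        revert H3; unfold Rabs; repeat destruct Rcase_abs; intros; nra.
      * exists (fun u => -1 * (1 - Rabs (u - x))). split; [apply lip_tent; lra|].
        assert (0 < dy) by nra.
        replace (x - x) with 0 by ring. rewrite Rabs_R0.
        rewrite (Rabs_minus_sym x y).
        revert H3; unfold Rabs; repeat destruct Rcase_abs; intros; nra.
    + rewrite Rmin_left by lra.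
      destruct (Rle_dec 0 dy) as [H4|H4].
      * exists (fun u => 1 * (1 - Rabs (u - y))). split; [apply lip_tent; lra|].
        assert (dx < 0) by nra.
        replace (y - y) with 0 by ring. rewrite Rabs_R0.
        revert H3; unfold Rabs; repeat destruct Rcase_abs; intros; nra.
      * exists (fun u => -1 * (1 - Rabs (u - y))). split; [apply lip_tent; lra|].
        assert (0 < dx) by nra.
        replace (y - y) with 0 by ring. rewrite Rabs_R0.
        revert H3; unfold Rabs; repeat destruct Rcase_abs; intros; nra.
Qed.
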